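(* Let $P\in\mathbb{Q}_{\ge0}^{N\times N}$ be the transition matrix of a reversible and ergodic Markov chain on $V$ with stationary distribution $\pi$ and mixing rate $t^*$. For the rotor-router model on a multidigraph for $P$, with any initial configuration, $$\left|\chi^{(T)}_w-\mu^{(T)}_w\right|\le\frac{3\pi_w}{\pi_{\min}}\,t^*\,\bar\Delta$$ for all $w\in V$ and $T\ge0$.
   Context: Let $V=\{1,\dots,N\}$ and let $P\in\mathbb{Q}_{\ge 0}^{N\times N}$ be an ergodic (irreducible, aperiodic) stochastic matrix with stationary distribution $\pi$; $\pi_{\min}=\min_v\pi_v$; reversible means $\pi_uP_{u,v}=\pi_vP_{v,u}$ for all $u,v$. For $v\in V$ let $\mathcal N(v)=\{u: P_{v,u}>0\}$. Total variation distance $d_{TV}(\xi,\zeta)=\frac12\|\xi-\zeta\|_1$; mixing time $\tau(\varepsilon)=\max_{v}\min\{t\ge0: d_{TV}(P^t_{v,\cdot},\pi)\le\varepsilon\}$; mixing rate $t^*=\tau(1/4)$. For each $v$ let $\bar\delta(v)$ be a positive integer with $\bar\delta(v)P_{v,u}\in\mathbb{Z}$ for all $u$, and $\bar\Delta=\max_v\bar\delta(v)$. The rotor router: $\sigma_v(0),\dots,\sigma_v(\bar\delta(v)-1)\in\mathcal N(v)$ is any sequence in which each $u\in\mathcal N(v)$ occurs exactly $\bar\delta(v)P_{v,u}$ times, extended by $\sigma_v(i)=\sigma_v(i\bmod\bar\delta(v))$. Write $I_{v,u}[z,z')=|\{j\in\{z,\dots,z'-1\}:\sigma_v(j)=u\}|$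 (zero if $z'\le z$). Given $\chi^{(0)}\in\mathbb{Z}_{\ge0}^N$, set $Z^{(t)}_{v,u}=I_{v,u}\big[\sum_{s=0}^{t-1}\chi^{(s)}_v,\sum_{s=0}^{t}\chi^{(s)}_v\big)$, $\chi^{(t+1)}_u=\sum_vZ^{(t)}_{v,u}$, $\mu^{(0)}=\chi^{(0)}$, $\mu^{(t)}=\mu^{(0)}P^t$. *)

(* Defs.v *)
From HB Require Import structures.
From mathcomp Require Import all_boot all_order all_algebra.
Set Implicit Arguments. Unset Strict Implicit. Unset Printing Implicit Defensive.
Import Order.TTheory GRing.Theory Num.Theory.
Local Open Scope ring_scope.

Section Defs.
Variable N : nat.
Implicit Types (P : 'M[rat]_N) (pi : 'I_N -> rat).

Definition stochastic P : Prop :=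
  (forall u v, 0 <= P u v) /\ (forall u, \sum_v P u v = 1).

Definition irreducible P : Prop :=
  forall u v, exists t : nat, 0 < (P ^+ t) u v.

(* aperiodic: for every state v, gcd{t >= 1 : P^t_{v,v} > 0} = 1,
   i.e. the only common divisor of all return times is 1 *)
Definition aperiodic P : Prop :=
  forall v (d : nat), (forall t : nat, (0 < t)%N -> 0 < (P ^+ t) v v -> (d %| t)%N) ->
    d = 1%N.

Definition ergodic P : Prop := irreducible P /\ aperiodic P.

Definition stationary P pi : Prop :=
  (forall v, 0 <= pi v) /\ \sum_v pi v = 1 /\
  (forall w, \sum_v pi v * P v w = pi w).

Definition reversible P pi : Prop :=
  forall u v, pi u * P u v = pi v * P v u.

(* pi_min = min_v pi_v (pi is a distribution, so all pi_v <= 1 and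
   taking 1 as the neutral element does not change the minimum when N >= 1) *)
Definition pi_min pi : rat := \big[Num.min/1]_v pi v.

Definition dTV (xi zeta : 'I_N -> rat) : rat :=
  2^-1 * \sum_v `|xi v - zeta v|.

Definition is_local_mixing_time P pi (eps : rat) (v : 'I_N) (t : nat) : Prop :=
  dTV (fun u => (P ^+ t) v u) pi <= eps /\
  (forall s : nat, (s < t)%N -> eps < dTV (fun u => (P ^+ s) v u) pi).

Definition is_mixing_time P pi (eps : rat) (tau : nat) : Prop :=
  (exists v, is_local_mixing_time P pi eps v tau) /\
  (forall v t, is_local_mixing_time P pi eps v t -> (t <= tau)%N).

Definition is_mixing_rate P pi (tstar : nat) : Prop :=
  is_mixing_time P pi (4%:R)^-1 tstar.

Definition valid_delta P (delta : 'I_N -> nat) : Prop :=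
  forall v, (0 < delta v)%N /\ forall u, exists k : nat, (delta v)%:R * P v u = k%:R.

Definition Delta_bar (delta : 'I_N -> nat) : nat := \max_v delta v.

Definition valid_rotor P (delta : 'I_N -> nat) (sigma : 'I_N -> nat -> 'I_N) : Prop :=
  forall v,
    (forall u, (count (fun i => sigma v i == u) (iota 0 (delta v)))%:R
                 = (delta v)%:R * P v u) /\
    (forall i, sigma v i = sigma v (i %% delta v)%N).

Definition Icount (sigma : 'I_N -> nat -> 'I_N) (v u : 'I_N) (z z' : nat) : nat :=
  count (fun j => sigma v j == u) (iota z (z' - z)).

(* history [:: chi^(0); ...; chi^(t)] of the rotor-router process *)
Fixpoint rr_hist (sigma : 'I_N -> nat -> 'I_N) (chi0 : 'I_N -> nat) (t : nat)
  : seq ('I_N -> nat) :=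
  match t with
  | 0 => [:: chi0]
  | t'.+1 =>
      let h := rr_hist sigma chi0 t' in
      rcons h (fun u => (\sum_v Icount sigma v u
                           (\sum_(s < t') nth (fun _ => 0%N) h s v)
                           (\sum_(s < t'.+1) nth (fun _ => 0%N) h s v))%N)
  end.

Definition rr_chi sigma chi0 (t : nat) : 'I_N -> nat :=
  nth (fun _ => 0%N) (rr_hist sigma chi0 t) t.

Definition rr_mu P (chi0 : 'I_N -> nat) (t : nat) (w : 'I_N) : rat :=
  \sum_v (chi0 v)%:R * (P ^+ t) v w.

End Defs.

(* Main.v *)
Require Import Defs.
From HB Require Import structures.
From mathcomp Require Import all_boot all_order all_algebra.
From mathcomp Require Import zify ring lra.
From Stdlib Require Import Classical.
Import Order.TTheory GRing.Theory Num.Theory.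
Local Open Scope ring_scope.
Set Implicit Arguments. Unset Strict Implicit. Unset Printing Implicit Defensive.


Section Mat.
Variable N : nat.
Variable P : 'M[rat]_N.
Hypothesis HP : stochastic P.

Lemma pw0 u v : (P ^+ 0) u v = (u == v)%:R.
Proof. by rewrite expr0 mxE. Qed.

Lemma pwD a b u v : (P ^+ (a + b)) u v = \sum_y (P ^+ a) u y * (P ^+ b) y v.
Proof. by rewrite exprD -mulmxE mxE. Qed.

Lemma pwS t u v : (P ^+ t.+1) u v = \sum_y P u y * (P ^+ t) y v.
Proof. by rewrite exprS -mulmxE mxE. Qed.

Lemma pwSr t u v : (P ^+ t.+1) u v = \sum_y (P ^+ t) u y * P y v.
Proof. by rewrite exprSr -mulmxE mxE. Qed.

Lemma pw_ge0 t u v : 0 <= (P ^+ t) u v.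
Proof.
elim: t u v => [|t IH] u v; first by rewrite pw0; case: (u == v).
rewrite pwS; apply: sumr_ge0 => y _; apply: mulr_ge0 => //; exact: HP.1.
Qed.

Lemma pw_sum1 t u : \sum_v (P ^+ t) u v = 1.
Proof.
elim: t u => [|t IH] u.
  rewrite (bigD1 u) //= pw0 eqxx big1 ?addr0 // => v /negbTE; rewrite eq_sym pw0 => ->; done.
under eq_bigr do rewrite pwS.
rewrite exchange_big /=.
under eq_bigr do rewrite -mulr_sumr IH mulr1.
exact: HP.2.
Qed.

Lemma pw_le1 t u v : (P ^+ t) u v <= 1.
Proof.
rewrite -(pw_sum1 t u) (bigD1 v) //= lerDl; apply: sumr_ge0 => *; exact: pw_ge0.
Qed.

Lemma pw_mul a b u y v : (P ^+ a) u y * (P ^+ b) y v <= (P ^+ (a + b)) u v.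
Proof.
rewrite pwD (bigD1 y) //= lerDl; apply: sumr_ge0 => *; apply: mulr_ge0; exact: pw_ge0.
Qed.

Variable pi : 'I_N -> rat.
Hypothesis Hpi : stationary P pi.

Lemma pi_pw t w : \sum_v pi v * (P ^+ t) v w = pi w.
Proof.
elim: t w => [|t IH] w.
  rewrite (bigD1 w) //= pw0 eqxx mulr1 big1 ?addr0 // => v /negbTE; rewrite pw0 => ->; by rewrite mulr0.
under eq_bigr do rewrite pwSr mulr_sumr.
rewrite exchange_big /=.
under eq_bigr => y _.
  rewrite (eq_bigr (fun v => (pi v * (P ^+ t) v y) * P y w)); last by move=> v _; rewrite mulrA.
  rewrite -mulr_suml IH.
  over.
exact: Hpi.2.2.
Qed.

Hypothesis Hrev : reversible P pi.

Lemma rev_pw t u v : pi u * (P ^+ t) u v = pi v * (P ^+ t) v u.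
Proof.
elim: t u v => [|t IH] u v.
  rewrite !pw0 eq_sym; case: eqP => [->|] //; by rewrite !mulr0.
rewrite pwS pwSr mulr_sumr mulr_sumr; apply: eq_bigr => y _.
rewrite mulrA Hrev -mulrA.
by rewrite mulrCA IH; ring.
Qed.


Lemma contr (mu : 'I_N -> rat) (Q : 'I_N -> 'I_N -> rat) (nu : 'I_N -> rat) c :
  \sum_u mu u = 0 -> (forall u, \sum_y `|Q u y - nu y| <= c) ->
  \sum_y `|\sum_u mu u * Q u y| <= c * \sum_u `|mu u|.
Proof.
move=> H0 HQ.
have E y : \sum_u mu u * Q u y = \sum_u mu u * (Q u y - nu y).
  under [RHS]eq_bigr do rewrite mulrBr.
  by rewrite sumrB -mulr_suml H0 mul0r subr0.
under eq_bigr do rewrite E.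
apply: (le_trans (ler_sum _ (fun y _ => ler_norm_sum _ _ _))).
rewrite exchange_big /= mulr_sumr; apply: ler_sum => u _.
under eq_bigr do rewrite normrM.
rewrite -mulr_sumr mulrC; apply: ler_wpM2r => //; exact: HQ.
Qed.

Definition D v s := \sum_y `|(P ^+ s) v y - pi y|.

Lemma D_ge0 v s : 0 <= D v s.
Proof. by apply: sumr_ge0 => *. Qed.

Lemma D_le2 v s : D v s <= 2.
Proof.
apply: (@le_trans _ _ (\sum_y ((P ^+ s) v y + pi y))).
  apply: ler_sum => y _; apply: (le_trans (ler_normB _ _)).
  rewrite !ger0_norm //; [exact: Hpi.1 | exact: pw_ge0].
by rewrite big_split /= pw_sum1 Hpi.2.1.
Qed.

Lemma D_step v s m (nu : 'I_N -> rat) c :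
  (forall u, \sum_y `|(P ^+ m) u y - nu y| <= c) -> D v (s + m) <= c * D v s.
Proof.
move=> Hc; rewrite /D.
have E y : (P ^+ (s + m)) v y - pi y = \sum_u ((P ^+ s) v u - pi u) * (P ^+ m) u y.
  under [RHS]eq_bigr do rewrite mulrBl.
  by rewrite sumrB pi_pw pwD.
under eq_bigr do rewrite E.
apply: (contr (Q := fun u y => (P ^+ m) u y)) => //.
by rewrite sumrB pw_sum1 Hpi.2.1 subrr.
Qed.

Lemma D_mono v s : D v s.+1 <= D v s.
Proof.
rewrite -addn1; apply: le_trans (D_step (nu := fun _ => 0) (c := 1) _ _ _) _.
  move=> u; under eq_bigr do rewrite subr0 ger0_norm ?pw_ge0 //.
  by rewrite pw_sum1.
by rewrite mul1r.
Qed.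

Lemma D_monoD v s k : D v (s + k) <= D v s.
Proof.
elim: k => [|k IH]; first by rewrite addn0.
by rewrite addnS; apply: le_trans (D_mono _ _) IH.
Qed.

Lemma D_doeblin x m eps v k : 0 < eps -> eps <= 1 ->
  (forall u, eps <= (P ^+ m) u x) -> D v (k * m) <= (1 - eps) ^+ k * 2.
Proof.
move=> e0 e1 He.
have Hc u : \sum_y `|(P ^+ m) u y - (if y == x then eps else 0)| <= 1 - eps.
  rewrite (bigD1 x) //= eqxx.
  rewrite ger0_norm ?subr_ge0 //.
  under eq_bigr => y /negbTE ny do rewrite ny subr0 ger0_norm ?pw_ge0 //.
  have := pw_sum1 m u; rewrite (bigD1 x) //= => <-.
  by rewrite addrAC.
elim: k => [|k IH]; first by rewrite mul0n expr0 mul1r D_le2.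
rewrite mulSn addnC; apply: le_trans (D_step _ _ Hc) _.
rewrite exprS -mulrA; apply: ler_wpM2l => //; lra.
Qed.

End Mat.


Section Erg.
Variable N : nat.
Variable P : 'M[rat]_N.
Hypothesis HP : stochastic P.

Lemma pos_return x : aperiodic P -> exists m0, forall n, (m0 <= n)%N -> 0 < (P ^+ n) x x.
Proof.
move=> Hap.
pose S t := (0 < t)%N && (0 < (P ^+ t) x x).
have Sadd a b : S a -> S b -> S (a + b)%N.
  move=> /andP[a0 Ha] /andP[b0 Hb]; apply/andP; split; first lia.
  apply: lt_le_trans (pw_mul HP a b x x x); exact: mulr_gt0.
have Smul a k : S a -> S (k.+1 * a)%N.
  move=> Ha; elim: k => [|k IH]; first by rewrite mul1n.
  by rewrite mulSn; apply: Sadd.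
have [t St] : exists t, S t.
  apply: NNPP => nE.
  have : (0 = 1)%N.
    apply: (Hap x 0%N) => t t0 Ht; exfalso; apply: nE; exists t; apply/andP; split => //.
  done.
have key : forall d, (0 < d)%N -> (exists p, S p /\ S (p + d)%N) -> exists p, S p /\ S (p + 1)%N.
  elim/ltn_ind => d IH d0 [p [Sp Spd]].
  case: (eqVneq d 1%N) => [d1|dn1]; first by exists p; rewrite -d1.
  have [t' [St' ndt]] : exists t', S t' /\ ~~ (d %| t')%N.
    apply: NNPP => nE; move: dn1; rewrite (Hap x d) // => t' t'0 Ht'.
    apply: NNPP => ndv; apply: nE; exists t'; split; first by apply/andP.
    by apply/negP.
  have r0 : (0 < t' %% d)%N by move: ndt; rewrite /dvdn lt0n.
  have rd : (t' %% d < d)%N by rewrite ltn_mod.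
  have Ediv := divn_eq t' d.
  apply: (IH (d - t' %% d)%N); [lia | lia |].
  exists ((t' %/ d).+1 * p + t')%N; split; first by apply: Sadd => //; apply: Smul.
  have -> : ((t' %/ d).+1 * p + t' + (d - t' %% d) = (t' %/ d).+1 * (p + d))%N.
    rewrite mulnDr. lia.
  exact: Smul.
have [p [Sp Sp1]] : exists p, S p /\ S (p + 1)%N.
  apply: (key t); first by case/andP: St.
  by exists t; split => //; rewrite -{2}(mul1n t) -mulSn; apply: Smul.
have p0 : (0 < p)%N by case/andP: Sp.
have comb : forall i j, (0 < i + j)%N -> S (i * p + j * (p + 1))%N.
  elim => [|i IH] j ij.
    rewrite mul0n add0n; case: j ij => // j _; exact: Smul.
  case: (posnP (i + j)%N) => [e0|pos].
    have -> : i = 0%N by lia.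
    have -> : j = 0%N by lia.
    by rewrite mul1n mul0n addn0.
  rewrite mulSn -addnA; apply: Sadd => //; exact: IH.
exists (p * p)%N => n Hn.
have Ed := divn_eq n p; have rp : (n %% p < p)%N by rewrite ltn_mod.
have qp : (p <= n %/ p)%N.
  rewrite leqNgt; apply/negP => H.
  have : (n %/ p * p + n %% p < p * p)%N.
    have : (n %/ p * p <= (p - 1) * p)%N by apply: leq_mul; lia.
    nia.
  lia.
have -> : n = ((n %/ p - n %% p) * p + n %% p * (p + 1))%N.
  rewrite {1}Ed mulnBl mulnDr muln1. 
  have : (n %% p * p <= n %/ p * p)%N by apply: leq_mul; lia.
  lia.
by case/andP: (comb (n %/ p - n %% p)%N (n %% p)%N ltac:(lia)).
Qed.


Lemma doeblin x : ergodic P -> exists m eps, 0 < eps /\ eps <= 1 /\ forall u, eps <= (P ^+ m) u x.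
Proof.
move=> [Hirr Hap].
have [m0 Hm0] := pos_return x Hap.
have [R HR] : exists R, forall u, exists2 r, (r <= R)%N & 0 < (P ^+ r) u x.
  suff: forall s : seq 'I_N, exists R, forall u, u \in s -> exists2 r, (r <= R)%N & 0 < (P ^+ r) u x.
    by case/(_ (enum 'I_N)) => R HR; exists R => u; apply: HR; rewrite mem_enum.
  elim => [|a s [R HR]]; first by exists 0%N.
  have [ra Ha] := Hirr a x.
  exists (maxn R ra) => u; rewrite in_cons; case/orP => [/eqP ->|us].
    by exists ra => //; rewrite leq_maxr.
  have [r rR Hr] := HR u us; exists r => //; apply: leq_trans rR (leq_maxl _ _).
have pos u : 0 < (P ^+ (R + m0)) u x.
  have [r rR Hr] := HR u.
  have -> : (R + m0 = r + (R + m0 - r))%N by lia.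
  apply: lt_le_trans (pw_mul HP _ _ u x x); apply: mulr_gt0 => //; apply: Hm0; lia.
exists (R + m0)%N, (\big[Num.min/1]_u (P ^+ (R + m0)) u x); split; last split.
- by apply: (big_ind (fun e => 0 < e)) => // a b a0 b0; rewrite lt_min a0 b0.
- by apply: (big_ind (fun e => e <= 1)) => // [a b a0 b0|u _]; [rewrite ge_min a0 | apply: pw_le1].
- by move=> u; rewrite (bigD1 u) //= ge_min lexx.
Qed.

Lemma bern (e : rat) k : 0 <= e -> e <= 1 -> (1 - e) ^+ k * (1 + k%:R * e) <= 1.
Proof.
move=> e0 e1; elim: k => [|k IH]; first by rewrite expr0 mul0r addr0 mulr1.
apply: le_trans IH; rewrite exprS -mulrA mulrCA; apply: ler_wpM2l; first by apply: exprn_ge0; lra.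
rewrite -natr1; have := mulr_ge0 (ler0n _ k.+1) (mulr_ge0 e0 e0); rewrite -natr1; nra.
Qed.

Variable pi : 'I_N -> rat.
Hypothesis Hpi : stationary P pi.

Lemma converge v : ergodic P -> exists t, D P pi v t <= 2^-1.
Proof.
move=> Herg.
have [m [eps [e0 [e1 He]]]] := doeblin v Herg.
have [k Hb] : exists k : nat, 3 / eps < k%:R.
  by exists (Num.Def.archi_bound (3 / eps)); apply: archi_boundP; apply: divr_ge0; lra.
exists (k * m)%N; apply: le_trans (@D_doeblin _ _ HP _ Hpi _ _ _ v k e0 e1 He) _.
have B := bern k (ltW e0) e1.
have kE : 3 < k%:R * eps by rewrite -ltr_pdivrMr.
have X0 : 0 <= (1 - eps) ^+ k by apply: exprn_ge0; rewrite subr_ge0.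
clear Hb He.
move: B kE X0; set X := (1 - eps) ^+ k; set Y := k%:R * eps => B kE X0.
have h : 0 <= X * (Y - 3) by apply: mulr_ge0 => //; lra.
rewrite mulrDr mulr1 in B; rewrite mulrBr in h.
lra.
Qed.

End Erg.


Lemma sum_const_le (f : nat -> rat) T (c : rat) : (forall s, (s < T)%N -> f s <= c) ->
  \sum_(s < T) f s <= T%:R * c.
Proof.
move=> H; apply: le_trans (ler_sum _ (fun (i : 'I_T) _ => H i (ltn_ord i))) _.
by rewrite sumr_const card_ord mulr_natl.
Qed.

Lemma sum_bound (f : nat -> rat) n T :
  (forall s, 0 <= f s) -> (forall s, f s <= 2) -> (forall s, (n <= s)%N -> f s <= 2^-1) ->
  (forall s, f (s + n)%N <= 2^-1 * f s) -> \sum_(s < T) f s <= 3%:R * n%:R.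
Proof.
move=> f0 f2 fh fd.
case: (posnP n) => [n0|npos].
  subst n; rewrite mulr0; apply: sumr_le0 => s _.
  have := fd s; rewrite addn0 => h; have := f0 s; lra.
have G : forall T1, \sum_(s < T1) f (n + s)%N <= n%:R.
  elim/ltn_ind => K IH.
  case: (leqP K n) => Tn.
    apply: le_trans (@sum_const_le (fun s => f (n + s)%N) K (2^-1) _) _.
      by move=> s _; apply: fh; rewrite leq_addr.
    have : (K%:R : rat) <= n%:R by rewrite ler_nat.
    have : (0 : rat) <= K%:R by [].
    lra.
  have -> : K = (n + (K - n))%N by lia.
  rewrite big_split_ord /=.
  have A1 : \sum_(i < n) f (n + lshift (K - n) i)%N <= n%:R * 2^-1.
    apply: (sum_const_le (f := fun i => f (n + i)%N)) => s _; apply: fh; by rewrite leq_addr.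
  have A2 : \sum_(i < K - n) f (n + rshift n i)%N <= 2^-1 * \sum_(i < K - n) f (n + i)%N.
    rewrite mulr_sumr; apply: ler_sum => i _ /=.
    by rewrite addnC; apply: fd.
  have A3 := IH (K - n)%N ltac:(lia).
  have : (0 : rat) <= n%:R by [].
  lra.
apply: (@le_trans _ _ (\sum_(s < n + T) f s)).
  rewrite addnC big_split_ord /= lerDl; apply: sumr_ge0 => *; exact: f0.
rewrite big_split_ord /=.
have B1 : \sum_(i < n) f (lshift T i) <= n%:R * 2 by apply: (sum_const_le (f := f)) => s _.
have B2 := G T.
lra.
Qed.

Lemma D_tstar N (P : 'M[rat]_N) pi tstar : stochastic P -> ergodic P -> stationary P pi ->
  is_mixing_rate P pi tstar -> forall v s, (tstar <= s)%N -> D P pi v s <= 2^-1.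
Proof.
move=> HP Herg Hpi [_ Hmix] v s ts.
have Hc := converge HP Hpi v Herg.
case: (ex_minnP Hc) => t0 Ht0 Hmin.
have Ht0le : (t0 <= tstar)%N.
  apply: (Hmix v t0); split.
    rewrite /dTV -/(D P pi v t0); lra.
  move=> s' s't0; rewrite /dTV -/(D P pi v s').
  have : ~~ (D P pi v s' <= 2^-1).
    apply/negP => H; have := Hmin s' H; lia.
  rewrite -ltNge; lra.
have -> : s = (t0 + (s - t0))%N by lia.
apply: le_trans (D_monoD HP Hpi _ _ _) Ht0.
Qed.


Lemma count_window (p : pred nat) d z : (0 < d)%N -> (forall i, p i = p (i %% d)%N) ->
  count p (iota z d) = count p (iota 0 d).
Proof.
case: d => // d' _ Hp; elim: z => [|z IH] //; rewrite -IH.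
rewrite -[in LHS](addn1 d') iotaD count_cat /= addn0.
have -> : (z.+1 + d')%N = (z + (d' + 1))%N by lia.
rewrite Hp.
rewrite addn1 modnDr -Hp; lia.
Qed.

Lemma count_periods (p : pred nat) d z q : (0 < d)%N -> (forall i, p i = p (i %% d)%N) ->
  count p (iota z (q * d)) = (q * count p (iota 0 d))%N.
Proof.
move=> d0 Hp; elim: q z => [|q IH] z; first by rewrite !mul0n.
by rewrite mulSn iotaD count_cat IH count_window.
Qed.

Lemma count_partial (p : pred nat) z r d : (r <= d)%N -> (count p (iota z r) <= count p (iota z d))%N.
Proof.
move=> rd; have -> : d = (r + (d - r))%N by lia.
by rewrite iotaD count_cat leq_addr.
Qed.

Lemma sum_count N (f : nat -> 'I_N) (s : seq nat) :
  (\sum_u count (fun j => f j == u) s)%N = size s.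
Proof.
elim: s => [|x s IH] /=; first by rewrite big1.
rewrite big_split /= IH (bigD1 (f x)) //= eqxx big1 ?addn0 ?add1n // => u /negbTE.
by rewrite eq_sym => ->.
Qed.

Lemma Icount_sum N (sigma : 'I_N -> nat -> 'I_N) v z z' :
  (\sum_u Icount sigma v u z z')%N = (z' - z)%N.
Proof. by rewrite /Icount sum_count size_iota. Qed.

Lemma Icount_dev N (P : 'M[rat]_N) delta sigma v u z L :
  stochastic P -> valid_delta P delta -> valid_rotor P delta sigma ->
  `|(Icount sigma v u z (z + L))%:R - L%:R * P v u| <= (delta v)%:R * P v u.
Proof.
move=> HP Hd Hr.
have d0 := (Hd v).1.
have [Hc Hper] := Hr v.
set d := delta v in d0 Hc Hper *.
set p := (fun j => sigma v j == u).
have pper i : p i = p (i %% d)%N by rewrite /p Hper.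
rewrite /Icount addKn.
have EL := divn_eq L d.
set q := (L %/ d)%N in EL; set r := (L %% d)%N in EL.
have rd : (r < d)%N by rewrite ltn_mod.
rewrite -/p EL iotaD count_cat count_periods //.
have c1le := leq_trans (count_partial p (z + q * d) (ltnW rd)) (eq_leq (count_window (z + q * d) d0 pper)).
have Puv := HP.1 v u.
move: (Hc u); rewrite -/p => Hc0.
set c0 := count p (iota 0 d) in Hc0 c1le *.
set c1 := count p (iota (z + q * d) r) in c1le *.
have c1R : (c1%:R : rat) <= c0%:R by rewrite ler_nat.
have rR : (r%:R : rat) <= d%:R by rewrite ler_nat ltnW.
rewrite natrD natrM natrD natrM.
have h1 : r%:R * P v u <= d%:R * P v u by apply: ler_wpM2r.
have h2 : 0 <= r%:R * P v u by apply: mulr_ge0.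
have h3 : (0 : rat) <= c1%:R by [].
have -> : q%:R * c0%:R + c1%:R - (q%:R * d%:R + r%:R) * P v u = c1%:R - r%:R * P v u.
  rewrite Hc0; ring.
rewrite ler_norml; apply/andP; split; lra.
Qed.

Section RR.
Variable N : nat.
Variable sigma : 'I_N -> nat -> 'I_N.
Variable chi0 : 'I_N -> nat.

Lemma size_rr_hist t : size (rr_hist sigma chi0 t) = t.+1.
Proof. by elim: t => [|t IH] //=; rewrite size_rcons IH. Qed.

Lemma rr_hist_nth t s : (s <= t)%N ->
  nth (fun _ => 0%N) (rr_hist sigma chi0 t) s = rr_chi sigma chi0 s.
Proof.
elim: t s => [|t IH] s.
  by rewrite leqn0 => /eqP ->.
rewrite leq_eqVlt => /orP[/eqP ->|st] //.
rewrite /= nth_rcons size_rr_hist st; exact: IH.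
Qed.

Lemma rr_chi0 : rr_chi sigma chi0 0 = chi0.
Proof. by []. Qed.

Definition X t v := (\sum_(s < t) rr_chi sigma chi0 s v)%N.

Lemma rr_chiS t u : rr_chi sigma chi0 t.+1 u =
  (\sum_v Icount sigma v u (X t v) (X t.+1 v))%N.
Proof.
rewrite {1}/rr_chi /= nth_rcons size_rr_hist ltnn eqxx /X.
apply: eq_bigr => v _; congr Icount.
  by apply: eq_bigr => i _; rewrite rr_hist_nth // ltnW.
by apply: eq_bigr => i _; rewrite rr_hist_nth // -ltnS.
Qed.

Lemma XS t v : X t.+1 v = (X t v + rr_chi sigma chi0 t v)%N.
Proof. by rewrite /X big_ord_recr. Qed.

End RR.

Unset Implicit Arguments.

Theorem theorem5p10 (N : nat) (P : 'M[rat]_N) (pi : 'I_N -> rat) (tstar : nat)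
  (delta : 'I_N -> nat) (sigma : 'I_N -> nat -> 'I_N) (chi0 : 'I_N -> nat) :
  stochastic P -> ergodic P -> stationary P pi -> reversible P pi ->
  is_mixing_rate P pi tstar ->
  valid_delta P delta -> valid_rotor P delta sigma ->
  forall (w : 'I_N) (T : nat),
    `| (rr_chi sigma chi0 T w)%:R - rr_mu P chi0 T w |
      <= 3%:R * pi w / pi_min pi * tstar%:R * (Delta_bar delta)%:R.
Proof.
move=> HP Herg Hpi Hrev Hmix Hd Hr w T.
have [v0 Hv0] : exists v0, 0 < pi v0.
  apply: NNPP => H.
  have : \sum_v pi v <= 0.
    apply: sumr_le0 => v _; rewrite leNgt; apply/negP => h; apply: H; by exists v.
  rewrite Hpi.2.1; lra.
have pipos u : 0 < pi u.
  have [t Ht] := Herg.1 v0 u.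
  rewrite -(pi_pw Hpi t u) (bigD1 v0) //=.
  apply: (@lt_le_trans _ _ (pi v0 * (P ^+ t) v0 u)); first exact: mulr_gt0.
  rewrite lerDl; apply: sumr_ge0 => v _; apply: mulr_ge0; [exact: Hpi.1 | exact: pw_ge0].
set pm := pi_min pi.
have pm0 : 0 < pm.
  by apply: (big_ind (fun e => 0 < e)) => // a b a0 b0; rewrite lt_min a0 b0.
have pmle u : pm <= pi u by rewrite /pm /pi_min (bigD1 u) //= ge_min lexx.
pose chi t v : rat := (rr_chi sigma chi0 t v)%:R.
pose Z t v u : rat := (Icount sigma v u (X sigma chi0 t v) (X sigma chi0 t.+1 v))%:R.
have sumZ t v : \sum_u Z t v u = chi t v.
  by rewrite /Z -natr_sum Icount_sum XS addKn.
have devZ t v u : `|Z t v u - chi t v * P v u| <= (Delta_bar delta)%:R * P v u.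
  apply: (@le_trans _ _ ((delta v)%:R * P v u)).
    rewrite /Z XS; exact: Icount_dev.
  by apply: ler_wpM2r; [exact: HP.1 | rewrite ler_nat; exact: leq_bigmax].
have E : chi T w - rr_mu P chi0 T w = \sum_(t < T) \sum_v \sum_u
    (Z t v u - chi t v * P v u) * ((P ^+ (T - t.+1)) u w - pi w).
  pose e t := \sum_v chi t v * (P ^+ (T - t)) v w.
  have eT : e T = chi T w.
    rewrite /e subnn (bigD1 w) //= pw0 eqxx mulr1 big1 ?addr0 // => v /negbTE.
    by rewrite pw0 => ->; rewrite mulr0.
  have e0 : e 0%N = rr_mu P chi0 T w by rewrite /e subn0.
  rewrite -eT -e0 -telescope_sumr // big_mkord; apply: eq_bigr => [[t /= tT]] _.
  rewrite /e.
  have -> : (T - t = (T - t.+1).+1)%N by lia.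
  set n := (T - t.+1)%N.
  have Hv v : \sum_u (Z t v u - chi t v * P v u) * ((P ^+ n) u w - pi w) =
      \sum_u Z t v u * (P ^+ n) u w - chi t v * (P ^+ n.+1) v w.
    under eq_bigr do rewrite mulrBr.
    rewrite sumrB -mulr_suml sumrB sumZ -mulr_sumr HP.2 mulr1 subrr mul0r subr0.
    under eq_bigr do rewrite mulrBl.
    rewrite sumrB pwS mulr_sumr; congr (_ - _); apply: eq_bigr => u _; by rewrite mulrA.
  under [RHS]eq_bigr do rewrite Hv.
  rewrite sumrB; congr (_ - _).
  rewrite exchange_big /=; apply: eq_bigr => u _.
  by rewrite -mulr_suml /chi rr_chiS natr_sum.
set Dl := (Delta_bar delta)%:R : rat.
have Dl0 : 0 <= Dl by [].
have Hcol u : \sum_v P v u <= pi u / pm.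
  rewrite ler_pdivlMr // mulr_suml.
  apply: (@le_trans _ _ (\sum_v pi u * P u v)); last by rewrite -mulr_sumr HP.2 mulr1.
  apply: ler_sum => v _; rewrite -Hrev (mulrC (pi v)); apply: ler_wpM2l; [exact: HP.1 | exact: pmle].
have Hrow n : \sum_u pi u * `|(P ^+ n) u w - pi w| = pi w * D P pi w n.
  rewrite /D mulr_sumr; apply: eq_bigr => u _.
  have h1 : pi u * `|(P ^+ n) u w - pi w| = `|pi u * ((P ^+ n) u w - pi w)|.
    by rewrite normrM ger0_norm // ltW.
  have h2 : pi w * `|(P ^+ n) w u - pi u| = `|pi w * ((P ^+ n) w u - pi u)|.
    by rewrite normrM ger0_norm // ltW.
  by rewrite h1 h2 !mulrBr (rev_pw Hrev n u w) (mulrC (pi u)).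
have Hsum : \sum_(t < T) D P pi w t <= 3%:R * tstar%:R.
  apply: sum_bound.
  - by move=> s; apply: D_ge0.
  - by move=> s; apply: D_le2.
  - by move=> s; apply: (D_tstar HP Herg Hpi Hmix).
  - move=> s; apply: (D_step HP Hpi) => u.
    exact: (D_tstar HP Herg Hpi Hmix u (leqnn _)).
rewrite E.
apply: le_trans (ler_norm_sum _ _ _) _.
apply: (@le_trans _ _ (\sum_(t < T) Dl / pm * (pi w * D P pi w (T - t.+1)))).
  apply: ler_sum => t _.
  set n := (T - t.+1)%N.
  apply: le_trans (ler_norm_sum _ _ _) _.
  apply: (@le_trans _ _ (\sum_v \sum_u Dl * P v u * `|(P ^+ n) u w - pi w|)).
    apply: ler_sum => v _; apply: le_trans (ler_norm_sum _ _ _) _; apply: ler_sum => u _.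
    rewrite normrM; apply: ler_wpM2r => //; exact: devZ.
  rewrite exchange_big /=.
  apply: (@le_trans _ _ (\sum_u Dl * (pi u / pm) * `|(P ^+ n) u w - pi w|)).
    apply: ler_sum => u _; rewrite -mulr_suml -mulr_sumr.
    by apply: ler_wpM2r => //; apply: ler_wpM2l => //; exact: Hcol.
  rewrite -Hrow mulr_sumr; apply: ler_sum => u _.
  rewrite le_eqVlt; apply/orP; left; apply/eqP; ring.
rewrite -mulr_sumr.
have -> : \sum_(t < T) pi w * D P pi w (T - t.+1) = pi w * \sum_(t < T) D P pi w t.
  by rewrite -mulr_sumr; congr (_ * _); rewrite -(big_mkord xpredT (fun t => D P pi w t)) big_rev_mkord subn0.
have c0 : 0 <= Dl / pm * pi w by apply: mulr_ge0; [apply: divr_ge0 => //; exact: ltW | exact: ltW].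
rewrite mulrA; apply: le_trans (ler_wpM2l c0 Hsum) _.
rewrite le_eqVlt; apply/orP; left; apply/eqP; ring.
Qed.
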